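(* Consider a fair division instance with $n$ agents, $m$ divisible goods, additive valuations $v_i(g)$ and generalized assignment constraints with sizes $s_{i,g}$ and budgets $B_i$. Let $\gamma>0$ satisfy: (1) $\gamma\le 1/2$; (2) $\gamma<\min_{i,h\in[n],g\in[m]} v_i(g)/v_h(g)$; (3) if the set $\{(i,h,g,g'):\rho_i(g')>\rho_i(g)\}$ is nonempty, then $\gamma<\frac12\min_{i,h\in[n],\,g,g'\in[m],\,\rho_i(g')>\rho_i(g)}\frac{v_i(g')-v_i(g)\,s_{i,g'}/s_{i,g}}{v_h(g')}$. Let $w\in\mathbb{R}_+^n$ have all components positive and let $x=(x_1,\dots,x_n)$ be a feasible allocation maximizing $\sum_{i=1}^n w_i v_i(x_i)$ over all feasible allocations. If $i,h\in[n]$ are agents with $w_h\le\gamma w_i$, then agent $i$ does not envy agent $h$ under $x$.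
   Context: An allocation is $x=(x_1,\dots,x_n)$ with $x_i\in[0,1]^m$ and $\sum_i x_{i,g}\le1$ for each good $g$. Additive valuations: $v_i(y)=\sum_g y_g v_i(g)$ with $v_i(g)\ge0$ the value of the whole good $g$ to $i$. Generalized assignment constraints: bundle $y$ is feasible for $i$ iff $\sum_g s_{i,g}y_g\le B_i$; an allocation is feasible if each $x_i$ is feasible for $i$. The density of good $g$ for agent $i$ is $\rho_i(g)=v_i(g)/s_{i,g}$. Agent $i$ envies agent $h$ in $x$ if some bundle $y\le x_h$ (componentwise) feasible for $i$ has $v_i(y)>v_i(x_i)$. *)

(* Defs.v *)
From mathcomp Require Import all_boot all_order all_algebra.
Set Implicit Arguments. Unset Strict Implicit. Unset Printing Implicit Defensive.
Import Order.TTheory GRing.Theory Num.Theory.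
Local Open Scope ring_scope.

Section FairDivision.
Variables (R : realFieldType) (n m : nat).

Definition is_bundle (y : 'I_m -> R) : Prop := forall g, 0 <= y g <= 1.

Definition is_allocation (x : 'I_n -> 'I_m -> R) : Prop :=
  (forall i, is_bundle (x i)) /\ (forall g, \sum_(i < n) x i g <= 1).

Definition value (v : 'I_n -> 'I_m -> R) (i : 'I_n) (y : 'I_m -> R) : R :=
  \sum_(g < m) y g * v i g.

Definition feasible_bundle (s : 'I_n -> 'I_m -> R) (B : 'I_n -> R)
    (i : 'I_n) (y : 'I_m -> R) : Prop :=
  \sum_(g < m) s i g * y g <= B i.

Definition feasible_allocation (s : 'I_n -> 'I_m -> R) (B : 'I_n -> R)
    (x : 'I_n -> 'I_m -> R) : Prop :=
  is_allocation x /\ (forall i, feasible_bundle s B i (x i)).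

Definition density (v s : 'I_n -> 'I_m -> R) (i : 'I_n) (g : 'I_m) : R :=
  v i g / s i g.

Definition envies (v s : 'I_n -> 'I_m -> R) (B : 'I_n -> R)
    (x : 'I_n -> 'I_m -> R) (i h : 'I_n) : Prop :=
  exists y : 'I_m -> R,
    is_bundle y /\ (forall g, y g <= x h g) /\ feasible_bundle s B i y /\
    value v i (x i) < value v i y.

End FairDivision.

(* Main.v *)
Require Import Defs.
From mathcomp Require Import all_boot all_order all_algebra.
From mathcomp Require Import ring lra.
Import Order.TTheory GRing.Theory Num.Theory.
Local Open Scope ring_scope.

Lemma sum_ite {R : realFieldType} {I : finType} (k0 : I) (F : I -> R) :
  \sum_k (if k == k0 then F k else 0) = F k0.
Proof. by rewrite (bigD1 k0) //= eqxx big1 ?addr0 // => k /negbTE ->. Qed.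

Definition upd {R : realFieldType} {n m : nat} (x : 'I_n -> 'I_m -> R) a0 k0 (c : R) :=
  fun a k => x a k + (if (a == a0) && (k == k0) then c else 0).

Lemma O_upd (R : realFieldType) n m (v : 'I_n -> 'I_m -> R) (w : 'I_n -> R) x a0 k0 c :
  \sum_(a < n) w a * value v a (upd x a0 k0 c a)
  = \sum_(a < n) w a * value v a (x a) + c * w a0 * v a0 k0.
Proof.
rewrite /value /upd.
have E : forall a, \sum_(k < m) (x a k + (if (a == a0) && (k == k0) then c else 0)) * v a k
   = \sum_(k < m) x a k * v a k + (if a == a0 then c * v a k0 else 0).
  move=> a; rewrite (eq_bigr _ (fun k _ => mulrDl _ _ _)) big_split /=; congr (_ + _).
  case: (a == a0) => /=.
    by rewrite (eq_bigr (fun k => if k == k0 then c * v a k else 0)) ?sum_ite // => k _; case: (k == k0); rewrite ?mul0r.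
  by rewrite big1 // => k _; rewrite mul0r.
rewrite (eq_bigr _ (fun a _ => congr1 _ (E a))).
rewrite (eq_bigr _ (fun a _ => mulrDr _ _ _)) big_split /=; congr (_ + _).
rewrite (eq_bigr (fun a => if a == a0 then c * w a * v a k0 else 0)) ?sum_ite // => a _.
by case: (a == a0); rewrite ?mulr0 // mulrCA mulrA.
Qed.

Lemma sumA_upd (R : realFieldType) n m (x : 'I_n -> 'I_m -> R) a0 k0 c k :
  \sum_(a < n) upd x a0 k0 c a k = \sum_(a < n) x a k + (if k == k0 then c else 0).
Proof.
rewrite /upd big_split /=; congr (_ + _).
case: (k == k0); last by rewrite big1 // => a _; rewrite andbF.
by rewrite (eq_bigr (fun a => if a == a0 then c else 0)) ?sum_ite // => a _; rewrite andbT.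
Qed.

Lemma sumS_upd (R : realFieldType) n m (s x : 'I_n -> 'I_m -> R) a0 k0 c a :
  \sum_(k < m) s a k * upd x a0 k0 c a k
  = \sum_(k < m) s a k * x a k + (if a == a0 then s a k0 * c else 0).
Proof.
rewrite /upd (eq_bigr _ (fun k _ => mulrDr _ _ _)) big_split /=; congr (_ + _).
case: (a == a0) => /=; last by rewrite big1 // => k _; rewrite mulr0.
rewrite (eq_bigr (fun k => if k == k0 then s a k * c else 0)) ?sum_ite // => k _.
by case: (k == k0); rewrite ?mulr0.
Qed.

Lemma two_le_sum {R : realFieldType} {n} (f : 'I_n -> R) i h :
  i != h -> (forall a, 0 <= f a) -> f i + f h <= \sum_a f a.
Proof.
move=> ih f0; rewrite (bigD1 i) //= (bigD1 h) /=; last by rewrite eq_sym.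
rewrite addrA lerDl; apply: sumr_ge0 => a _; exact: f0.
Qed.

Lemma feas_pert {R : realFieldType} {n m : nat} (s : 'I_n -> 'I_m -> R) (B : 'I_n -> R)
  (x : 'I_n -> 'I_m -> R) (i h : 'I_n) (g' g0 : 'I_m) (e d : R) :
  feasible_allocation s B x -> (forall a k, 0 < s a k) -> i != h ->
  0 <= e -> e <= x h g' -> 0 <= d -> d <= x i g0 ->
  \sum_(k < m) s i k * x i k + s i g' * e + s i g0 * - d <= B i ->
  feasible_allocation s B (upd (upd (upd x i g' e) h g' (-e)) i g0 (-d)).
Proof.
move=> [[xb xs] xf] spos ih e0 eh d0 di hB.
have xge0 : forall a k, 0 <= x a k by move=> a k; case/andP: (xb a k).
have xle1 : forall a k, x a k <= 1 by move=> a k; case/andP: (xb a k).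
have two : x i g' + x h g' <= 1.
  apply: le_trans (xs g'); apply: (two_le_sum (fun a => x a g')) => //.
split; [split|].
- move=> a k; rewrite /upd.
  have := xge0 a k; have := xle1 a k.
  case: (eqVneq a i) => [->|ai].
    rewrite ?eqxx (negbTE ih) /=.
    have H1 : k = g' -> x i k + e <= 1 by move->; lra.
    have H2 : k = g0 -> d <= x i k by move->.
    case: eqP => [/H1 ?|_]; case: eqP => [/H2 ?|_]; move=> *; apply/andP; split; lra.
  rewrite /=.
  case: (eqVneq a h) => [->|ah] /=.
    have H3 : k = g' -> e <= x h k by move->.
    case: eqP => [/H3 ?|_]; move=> *; apply/andP; split; lra.
  rewrite /= => *; apply/andP; split; lra.
- move=> k; rewrite !sumA_upd; have := xs k.
  case: (k == g'); case: (k == g0); lra.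
- move=> a; rewrite /feasible_bundle !sumS_upd; have := xf a.
  rewrite /feasible_bundle.
  have := mulr_ge0 (ltW (spos h g')) e0.
  case: (eqVneq a i) => [->|ai]; first by rewrite ?eqxx (negbTE ih); lra.
  case: (eqVneq a h) => [->|ah]; rewrite ?eqxx ?(negbTE ah); lra.
Qed.

Theorem lemma3 (R : realFieldType) (n m : nat)
    (v s : 'I_n -> 'I_m -> R) (B : 'I_n -> R) (gamma : R)
    (w : 'I_n -> R) (x : 'I_n -> 'I_m -> R) (i h : 'I_n) :
  (forall a g, 0 < v a g) ->
  (forall a g, 0 < s a g) ->
  0 < gamma ->
  gamma <= 1 / 2 ->
  (forall a b g, gamma < v a g / v b g) ->
  (forall a b g g', density v s a g < density v s a g' ->
     gamma < 1 / 2 * ((v a g' - v a g * s a g' / s a g) / v b g')) ->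
  (forall a, 0 < w a) ->
  feasible_allocation s B x ->
  (forall x', feasible_allocation s B x' ->
     \sum_(a < n) w a * value v a (x' a) <= \sum_(a < n) w a * value v a (x a)) ->
  w h <= gamma * w i ->
  ~ envies v s B x i h.
Proof.
move=> vpos spos gpos ghalf h2 h3 wpos xfeas xopt whi [y [yb [yle [yf ylt]]]].
have ih : i != h.
  apply/eqP => eih; move: whi; rewrite -eih => whi.
  have := ler_wpM2r (ltW (wpos i)) ghalf; have := wpos i; lra.
have [[xb xs] xf] := xfeas.
have yge0 : forall k, 0 <= y k by move=> k; case/andP: (yb k).
have xge0 : forall a k, 0 <= x a k by move=> a k; case/andP: (xb a k).
have vxi0 : 0 <= value v i (x i).
  by apply: sumr_ge0 => k _; apply: mulr_ge0 => //; apply: ltW.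
have key : forall g0 g' e d, 0 <= e -> e <= x h g' -> 0 <= d -> d <= x i g0 ->
   \sum_(k < m) s i k * x i k + s i g' * e + s i g0 * - d <= B i ->
   0 < e * w i * v i g' + (-e) * w h * v h g' + (-d) * w i * v i g0 -> False.
  move=> g0 g' e d e0 eh d0 di hB hg.
  have := xopt _ (feas_pert s B x i h g' g0 e d xfeas spos ih e0 eh d0 di hB).
  rewrite !O_upd; lra.
have xS : \sum_(k < m) s i k * x i k <= B i by exact: xf.
case: (pickP (fun g => 0 < y g)) => [g1 yg1 | ny]; last first.
  have : value v i y = 0.
    apply: big1 => k _.
    have yk : y k <= 0 by rewrite leNgt ny.
    have -> : y k = 0 by apply/le_anti; rewrite yk yge0.
    by rewrite mul0r.
  lra.
have xhpos : forall g, 0 < y g -> 0 < x h g.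
  by move=> g yg; apply: lt_le_trans yg (yle g).
case: (ltrP (\sum_(k < m) s i k * x i k) (B i)) => hS.
  pose e := Order.min (x h g1) ((B i - \sum_(k < m) s i k * x i k) / s i g1).
  have epos : 0 < e.
    rewrite lt_min; apply/andP; split; first exact: xhpos.
    by apply: divr_gt0 => //; rewrite subr_gt0.
  have eh : e <= x h g1 by rewrite ge_min lexx.
  have eB : e <= (B i - \sum_(k < m) s i k * x i k) / s i g1 by rewrite ge_min lexx orbT.
  rewrite ler_pdivlMr // in eB.
  apply: (key g1 g1 e 0 (ltW epos) eh (lexx 0) (xge0 i g1)).
    rewrite oppr0 mulr0 addr0 mulrC; lra.
  have t1 := h2 i h g1; rewrite ltr_pdivlMr // in t1.
  have t2 : gamma * v h g1 * w i < v i g1 * w i by rewrite ltr_pM2r.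
  have t3 := ler_wpM2r (ltW (vpos h g1)) whi.
  have : 0 < w i * v i g1 - w h * v h g1 by lra.
  move/(mulr_gt0 epos); lra.
have [g0 [g' [xg0 [yg' hr]]]] : exists g0 g', 0 < x i g0 /\ 0 < y g' /\
    density v s i g0 < density v s i g'.
  case: (@arg_maxP _ _ _ g1 (fun k => 0 < y k) (density v s i) yg1) => gs ygs gsmax.
  case: (pickP (fun k => (0 < x i k) && (density v s i k < density v s i gs))) =>
    [g0 /andP [xg0 hg0] | nk].
    by exists g0, gs.
  exfalso.
  set r := density v s i gs in gsmax nk.
  have Hy : forall k, y k * v i k <= r * (s i k * y k).
    move=> k; case: (ltrP 0 (y k)) => yk.
      have hk : density v s i k <= r := gsmax k yk.
      rewrite /density ler_pdivrMr // in hk.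
      by rewrite mulrC mulrA; apply: ler_wpM2r => //; apply: ltW.
    have -> : y k = 0 by apply/le_anti; rewrite yk yge0.
    by rewrite !(mul0r, mulr0).
  have Hx : forall k, r * (s i k * x i k) <= x i k * v i k.
    move=> k; case: (ltrP 0 (x i k)) => xk.
      have := nk k; rewrite xk /= => /negbT; rewrite -leNgt /density ler_pdivlMr // => hk.
      by rewrite mulrA [x i k * _]mulrC; apply: ler_wpM2r => //; apply: ltW.
    have -> : x i k = 0 by apply/le_anti; rewrite xk xge0.
    by rewrite !(mul0r, mulr0).
  have r0 : 0 <= r by rewrite /r /density; apply: divr_ge0; apply: ltW.
  have L1 : value v i y <= r * \sum_(k < m) s i k * y k.
    by rewrite mulr_sumr; apply: ler_sum => k _.
  have L2 : r * \sum_(k < m) s i k * x i k <= value v i (x i).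
    by rewrite mulr_sumr; apply: ler_sum => k _.
  have L3 := ler_wpM2l r0 yf.
  have L4 := ler_wpM2l r0 hS.
  rewrite /feasible_bundle in L3; lra.
have s0p := spos i g0; have s'p := spos i g'.
pose e := Order.min (x h g') (x i g0 * s i g0 / s i g').
pose d := e * s i g' / s i g0.
have epos : 0 < e.
  rewrite lt_min; apply/andP; split; first exact: xhpos.
  by apply: divr_gt0 => //; apply: mulr_gt0.
have eh : e <= x h g' by rewrite ge_min lexx.
have e2 : e <= x i g0 * s i g0 / s i g' by rewrite ge_min lexx orbT.
have dpos : 0 < d by apply: divr_gt0 => //; apply: mulr_gt0.
have di : d <= x i g0.
  rewrite /d ler_pdivrMr //; rewrite ler_pdivlMr // in e2.
have dd : s i g0 * - d = - (s i g' * e).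
  rewrite /d; field; rewrite gt_eqF //.
apply: (key g0 g' e d (ltW epos) eh (ltW dpos) di); first by rewrite dd; lra.
have t := h3 i h g0 g' hr.
set D := v i g' - v i g0 * s i g' / s i g0 in t.
set vh := v h g' in t *.
have vhp : 0 < vh by exact: vpos.
set q := D / vh in t.
have Dq : D = q * vh by rewrite /q; field; rewrite gt_eqF.
have gd : d * w i * v i g0 = e * w i * (v i g0 * s i g' / s i g0) by rewrite /d; ring.
have t3 := ler_wpM2r (ltW vhp) whi.
have : 0 < w i * D - w h * vh.
  rewrite Dq. have : gamma < q by lra. move=> gq.
  have : gamma * (vh * w i) < q * (vh * w i) by rewrite ltr_pM2r // mulr_gt0.
  lra.
move/(mulr_gt0 epos).
rewrite /D.
have -> : - d * w i * v i g0 = - (d * w i * v i g0) by ring.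
rewrite gd; lra.
Qed.
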